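(* Let $q=q_0^2$ be odd and let $V$ be a vector space over $\mathbb{F}_q$ with a non-degenerate hermitian form $f$. Let $s\ge1$ and let $v=\sum_{i=1}^s v_i$ for singular vectors $v_1,\dots,v_s\in V$. Then there exist $1\le i\le s$ and $\lambda\in\mathbb{F}_{q_0}$ such that $v-\lambda v_i$ is singular.
   Context: The hermitian form satisfies $f(u,\lambda v+w)=\lambda f(u,v)+f(u,w)$ and $f(w,u)=f(u,w)^{q_0}$. A vector $v$ is singular if $f(v,v)=0$. *)

(* Defs.v *)
From mathcomp Require Import all_boot all_algebra.
Set Implicit Arguments. Unset Strict Implicit. Unset Printing Implicit Defensive.
Import GRing.Theory.
Local Open Scope ring_scope.

(* A hermitian form on V (over F = F_{q0^2}): linear in the second argument,
   and f(w,u) = f(u,w)^{q0}. *)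
Definition herm_form (F : fieldType) (V : lmodType F) (q0 : nat)
  (f : V -> V -> F) : Prop :=
  (forall (u v w : V) (l : F), f u (l *: v + w) = l * f u v + f u w) /\
  (forall u w : V, f w u = (f u w) ^+ q0).

Definition nondeg_form (F : fieldType) (V : lmodType F) (f : V -> V -> F) : Prop :=
  forall u : V, (forall w : V, f u w = 0) -> u = 0.

Definition singular_vec (F : fieldType) (V : lmodType F) (f : V -> V -> F) (v : V) : Prop :=
  f v v = 0.

(* Elements of the subfield F_{q0} of F_{q0^2}: fixed points of x |-> x^q0. *)
Definition in_subfield (F : fieldType) (q0 : nat) (l : F) : Prop := l ^+ q0 = l.

(* Main.v *)
Require Import Defs.
From mathcomp Require Import all_boot all_algebra all_fingroup all_solvable all_field.
From mathcomp Require Import ring.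
Import GRing.Theory.
Local Open Scope ring_scope.
Lemma pnat_card (F : finFieldType) p : p \in [pchar F] -> p.-nat #|F|.
Proof.
move=> hp; have := abelem_pgroup (fin_ring_pchar_abelem hp).
by rewrite /pgroup cardsT.
Qed.
Lemma two_neq0 (F : finFieldType) : odd #|F| -> (2%:R : F) != 0.
Proof.
move=> hodd; apply/negP => h2.
have hp : (2%N \in [pchar F]) by rewrite inE h2 andbT.
have h1 := @pnat_card F 2 hp.
have h2' : (2%N^').-nat #|F| by rewrite p'natE // dvdn2 negbK.
move: (pnat_1 h1 h2') => e.
by move: (finNzRing_gt1 F); rewrite e.
Qed.
Lemma frobD (F : finFieldType) (q0 : nat) : #|F| = (q0 ^ 2)%N ->
  forall x y : F, (x + y) ^+ q0 = x ^+ q0 + y ^+ q0.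
Proof.
move=> hq x y; have [p pp hp] := finPcharP F.
apply: exprDn_pchar.
rewrite (eq_pnat _ (pcharf_eq hp)).
apply: (@pnat_dvd _ #|F|); last exact: (@pnat_card F p hp).
by rewrite hq dvdn_exp.
Qed.

Theorem lemma4p19 (F : finFieldType) (q0 : nat)
  (hq : #|F| = (q0 ^ 2)%N) (hodd : odd #|F|)
  (V : lmodType F) (f : V -> V -> F)
  (hf : herm_form q0 f) (hnd : nondeg_form f)
  (s : nat) (hs : (1 <= s)%N) (vs : 'I_s -> V)
  (hsing : forall i, singular_vec f (vs i)) :
  exists (i : 'I_s) (l : F),
    in_subfield q0 l /\ singular_vec f ((\sum_(j < s) vs j) - l *: vs i).
Proof.
case: hf => hlin hsym.
have fD := @frobD F q0 hq.
have fK : forall x : F, (x ^+ q0) ^+ q0 = x.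
  by move=> x; rewrite -exprM mulnn -hq expf_card.
have q0pos : q0 != 0%N.
  by apply/eqP => e; move: (finNzRing_gt1 F); rewrite hq e.
have fN : forall x : F, (- x) ^+ q0 = - x ^+ q0.
  move=> x; apply/eqP; rewrite -subr_eq0 opprK -fD addNr expr0n.
  by rewrite (negbTE q0pos).
have fadd : forall u v w, f u (v + w) = f u v + f u w.
  by move=> u v w; have := hlin u v w 1; rewrite scale1r mul1r.
have f0 : forall u, f u 0 = 0.
  move=> u; have H := fadd u 0 0; rewrite addr0 in H.
  by apply/(addrI (f u 0)); rewrite addr0 -H.
have fZ : forall u v (l : F), f u (l *: v) = l * f u v.
  by move=> u v l; rewrite -(addr0 (l *: v)) hlin f0 addr0.
set v := \sum_(j < s) vs j.
set c := f v v.
pose a i := f v (vs i).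
pose t i := a i + (a i) ^+ q0.
have cF : c ^+ q0 = c by rewrite /c -hsym.
have fL : forall u u' w (l : F), f (l *: u + u') w = l ^+ q0 * f u w + f u' w.
  by move=> u u' w l; rewrite hsym hlin fD exprMn -!hsym.
have Q : forall i l, l ^+ q0 = l -> f (v - l *: vs i) (v - l *: vs i) = c - l * t i.
  move=> i l hl.
  have e : v - l *: vs i = (- l) *: vs i + v by rewrite addrC scaleNr.
  rewrite e fL !hlin hsing fN hl /c /t /a (hsym (vs i) v) -/v.
  rewrite fK mulr0 add0r; ring.
have sumF : c = \sum_i a i by rewrite /c {2}/v; exact: (big_morph (f v) (fadd v) (f0 v)).
have sumq : \sum_i (a i) ^+ q0 = c ^+ q0.
  rewrite sumF; apply/esym; apply: (big_morph (fun x : F => x ^+ q0) fD).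
  by rewrite expr0n (negbTE q0pos).
have [c0|cn0] := eqVneq c 0.
  exists (Ordinal hs), 0; split; first by rewrite /in_subfield expr0n (negbTE q0pos).
  by rewrite /singular_vec Q ?c0 ?mul0r ?subr0 // expr0n (negbTE q0pos).
have [i ti] : exists i, t i != 0.
  case: (pickP (fun i => t i != 0)) => [i ti|H]; first by exists i.
  exfalso.
  have : \sum_i t i = 0 by apply: big1 => i _; apply/eqP; move: (H i) => /= /negbFE.
  rewrite big_split /= -sumF sumq cF => /eqP.
  by rewrite -mulr2n -mulr_natr mulf_eq0 (negbTE cn0) (negbTE (@two_neq0 F hodd)).
have tF : t i ^+ q0 = t i by rewrite /t fD fK addrC.
exists i, (c / t i).
have hl : (c / t i) ^+ q0 = c / t i by rewrite exprMn exprVn cF tF.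
split; first exact: hl.
by rewrite /singular_vec Q // divfK // subrr.
Qed.
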